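(* Let $n_1,n_2$ be positive integers. Fix $L\in\mathbb{R}^{n_1\times n_2}$ of rank $r$, a basis matrix $G\in\mathbb{R}^{n_1\times r_G}$ with $L_{\mathrm{new}}:=(I-GG^\top)L$ of rank less than $r$, and a matrix $S_0\in\mathbb{R}^{n_1\times n_2}$ with all entries nonzero. For a random subset $\Omega$ of $\{1,\dots,n_1\}\times\{1,\dots,n_2\}$, let $S=\mathcal P_\Omega S_0$ and $M=L+S$, and let ''Success'' be the event that $(L_{\mathrm{new}},S,L^\top G)$ is the unique solution of $$\min_{\tilde L_{\mathrm{new}},\tilde S,\tilde X}\|\tilde L_{\mathrm{new}}\|_*+\lambda\|\tilde S\|_1\ \text{ s.t. }\ \tilde L_{\mathrm{new}}+G\tilde X^\top+\tilde S=M.$$ Let $m_0$ be an integer and $\epsilon_0>0$, and set $\rho_0=\frac{m_0}{n_1n_2}+\epsilon_0\in[0,1]$. Then $$\mathbb{P}_{\mathrm{Unif}(m_0)}(\mathrm{Success})\ge\mathbb{P}_{\mathrm{Ber}(\rho_0)}(\mathrm{Success})-e^{-2n_1n_2\epsilon_0^2}.$$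
   Context: $\mathcal P_\Omega S_0$ keeps the entries of $S_0$ with index in $\Omega$ and sets the others to zero. $\mathbb{P}_{\mathrm{Unif}(m)}$ is probability when $\Omega$ is uniformly distributed among all index subsets of size $m$; $\mathbb{P}_{\mathrm{Ber}(\rho)}$ is probability when each index $(i,j)$ belongs to $\Omega$ independently with probability $\rho$. A basis matrix satisfies $G^\top G=I$. $\lambda>0$ is a fixed parameter; the variables range over $\tilde L_{\mathrm{new}},\tilde S\in\mathbb{R}^{n_1\times n_2}$, $\tilde X\in\mathbb{R}^{n_2\times r_G}$. *)

(* Defs.v *)
From HB Require Import structures.
From mathcomp Require Import all_boot all_order all_algebra.
From mathcomp Require Import all_classical all_reals.
From mathcomp.analysis Require Import sequences exp.
Set Implicit Arguments. Unset Strict Implicit. Unset Printing Implicit Defensive.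
Import Order.TTheory GRing.Theory Num.Theory.
Local Open Scope ring_scope.

Section Defs.
Context {R : realType}.

Definition psd n (P : 'M[R]_n) : Prop :=
  P^T = P /\ forall x : 'cV[R]_n, 0 <= (x^T *m P *m x) 0 0.

Definition psd_sqrt n (B : 'M[R]_n) : 'M[R]_n :=
  xget 0 [set P : 'M[R]_n | psd P /\ P *m P = B].

Definition nuclear_norm m n (A : 'M[R]_(m, n)) : R := \tr (psd_sqrt (A^T *m A)).

Definition l1_norm m n (A : 'M[R]_(m, n)) : R := \sum_i \sum_j `|A i j|.

Definition proj_Omega m n (Omega : {set 'I_m * 'I_n}) (A : 'M[R]_(m, n)) :
  'M[R]_(m, n) := \matrix_(i, j) (if (i, j) \in Omega then A i j else 0).

Definition objective (lam : R) n1 n2 rG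
  (Ln : 'M[R]_(n1, n2)) (S : 'M[R]_(n1, n2)) (X : 'M[R]_(n2, rG)) : R :=
  nuclear_norm Ln + lam * l1_norm S.

Definition feasible n1 n2 rG (G : 'M[R]_(n1, rG)) (M : 'M[R]_(n1, n2))
  (Ln : 'M[R]_(n1, n2)) (S : 'M[R]_(n1, n2)) (X : 'M[R]_(n2, rG)) : Prop :=
  Ln + G *m X^T + S = M.

Definition is_minimizer (lam : R) n1 n2 rG (G : 'M[R]_(n1, rG)) (M : 'M[R]_(n1, n2))
  Ln S X : Prop :=
  feasible G M Ln S X /\
  forall Ln' S' X', feasible G M Ln' S' X' ->
    objective lam Ln S X <= objective lam Ln' S' X'.

Definition unique_solution (lam : R) n1 n2 rG (G : 'M[R]_(n1, rG))
  (M : 'M[R]_(n1, n2)) Ln S X : Prop :=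
  is_minimizer lam G M Ln S X /\
  forall Ln' S' X', is_minimizer lam G M Ln' S' X' ->
    (Ln', S', X') = (Ln, S, X).

Definition Success (lam : R) n1 n2 rG (L : 'M[R]_(n1, n2)) (G : 'M[R]_(n1, rG))
  (S0 : 'M[R]_(n1, n2)) (Omega : {set 'I_n1 * 'I_n2}) : Prop :=
  let Lnew := (1%:M - G *m G^T) *m L in
  let S := proj_Omega Omega S0 in
  let M := L + S in
  unique_solution lam G M Lnew S (L^T *m G).

Definition prob_unif n1 n2 (m : nat) (E : {set 'I_n1 * 'I_n2} -> Prop) : R :=
  (#|[set Om : {set 'I_n1 * 'I_n2} | (#|Om| == m) && `[< E Om >]]|%:R)
  / ('C(n1 * n2, m))%:R.

Definition prob_ber n1 n2 (rho : R) (E : {set 'I_n1 * 'I_n2} -> Prop) : R :=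
  \sum_(Om : {set 'I_n1 * 'I_n2} | `[< E Om >])
     rho ^+ #|Om| * (1 - rho) ^+ (n1 * n2 - #|Om|).

End Defs.

(* Main.v *)
Require Import Defs.
From HB Require Import structures.
From mathcomp Require Import all_boot all_order all_algebra.
From mathcomp Require Import all_classical all_reals.
From mathcomp.analysis Require Import sequences exp.
Import Order.TTheory GRing.Theory Num.Theory.


From mathcomp.analysis Require Import topology normedtype derive realfun.
From mathcomp Require Import ring lra.
Import numFieldNormedType.Exports.
Local Open Scope ring_scope.
Section H.
Variable R : realType.
Variable p : R.
Hypothesis p0 : 0 <= p.
Hypothesis p1 : p <= 1.

Let D (t : R) : R := 1 - p + p * expR (- t).

Lemma D_gt0 t : 0 < D t.
Proof.
rewrite /D; have e := expR_gt0 (- t).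
have [->|pn1] := eqVneq p 1; first by rewrite subrr add0r mul1r.
have : p < 1 by rewrite lt_neqAle pn1 p1.
move=> hp; have := mulr_ge0 p0 (ltW e); lra.
Qed.

Lemma dexpN (t : R) : is_derive t (1:R) (fun x : R => expR (- x)) (- expR (- t)).
Proof.
have -> : (fun x : R => expR (- x)) = expR \o -%R by [].
have := @is_derive1_comp R expR -%R t (expR (-t)) (-1) (is_derive_expR (-t)) (is_deriveNid t 1).
by rewrite mulrN1.
Qed.

Lemma dD (t:R) : is_derive t (1:R) D (- (p * expR (- t))).
Proof.
apply: (is_derive_eq (is_deriveD (is_derive_cst (1-p) t 1) (is_deriveZ p (dexpN t)))).
by rewrite add0r scalerN.
Qed.

Lemma mono0 (f df : R -> R) : (forall x, is_derive x (1:R) f (df x)) ->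
  (forall x, 0 <= x -> 0 <= df x) -> forall t, 0 <= t -> f 0 <= f t.
Proof.
move=> H Hd t t0.
have [|c] := @MVT_segment R f df 0 t t0 (fun x _ => H x).
  apply/continuous_subspaceT=> r.
  have [dr _] := H r.
  exact/differentiable_continuous/derivable1_diffP.
rewrite in_itv /= => /andP[c0 _] E.
rewrite -subr_ge0 E subr0; apply: mulr_ge0 => //; exact: Hd.
Qed.

Let E (t : R) : R := p * expR (- t).
Let h1 (t : R) : R := - p + 4^-1 * t + E t / D t.
Let h2 (t : R) : R := 4^-1 - E t * (1 - p) / (D t) ^+ 2.
Let h (t : R) : R := - (t * p) + 8^-1 * t ^+ 2 - ln (D t).

Lemma dE (t:R) : is_derive t (1:R) E (- E t).
Proof.
apply: (is_derive_eq (is_deriveZ p (dexpN t))).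
by rewrite /E scalerN.
Qed.

Lemma dh1 (t:R) : is_derive t (1:R) h1 (h2 t).
Proof.
have Dn0 : D t != 0 by rewrite gt_eqF // D_gt0.
have := is_deriveV Dn0 (dD t).
move=> dV.
have := is_deriveM (dE t) dV.
move=> dQ.
have d4 := is_deriveZ (4^-1 : R) (is_derive_id t (1:R)).
have := is_deriveD (is_deriveD (is_derive_cst (- p) t 1) d4) dQ.
move=> dd; apply: (is_derive_eq dd).
rewrite /h2 /= /E /D. rewrite /GRing.scale /=.
move: Dn0; rewrite /D; set e := expR (- t) => Dn0.
by field.
Qed.

Lemma dh (t:R) : is_derive t (1:R) h (h1 t).
Proof.
have Dn0 : D t != 0 by rewrite gt_eqF // D_gt0.
have d1 := is_deriveN (is_deriveM (is_derive_id t (1:R)) (is_derive_cst p t 1)).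
have d2 := is_deriveZ (8^-1 : R) (is_deriveX 2 (is_derive_id t (1:R))).
have d3 := is_derive1_comp (is_derive1_ln (D_gt0 t)) (dD t).
have dd := is_deriveB (is_deriveD d1 d2) d3.
apply: (is_derive_eq dd).
rewrite /h1 /= /E /D; rewrite /GRing.scale /=.
move: Dn0; rewrite /D; set e := expR (- t) => Dn0.
rewrite /cst expr1; by field.
Qed.

Lemma hoeff_aux (t : R) : 0 <= t -> D t <= expR (- (t * p) + 8^-1 * t ^+ 2).
Proof.
move=> t0.
have h10 : forall x, 0 <= x -> 0 <= h1 x.
  move=> x x0.
  have := @mono0 h1 h2 dh1 _ x x0.
  have -> : h1 0 = 0.
    rewrite /h1 /E /D oppr0 expR0 mulr1 mulr0 addr0 subrK divr1. by rewrite addNr.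
  apply => y _.
  rewrite /h2 subr_ge0 /E.
  have Dy := D_gt0 y; move: Dy; rewrite /D; set e := expR (- y) => Dy.
  have e0 : 0 < e by exact: expR_gt0.
  rewrite ler_pdivrMr; last by exact: exprn_gt0.
  have := sqr_ge0 (p * e - (1 - p)).
  move=> sq. nra.
have := @mono0 h h1 dh h10 t t0.
have -> : h 0 = 0.
  rewrite /h /D oppr0 expR0 mulr1 subrK ln1 mul0r oppr0 add0r expr0n /=. by rewrite mulr0 addr0.
rewrite /h subr_ge0 => Hl.
rewrite -(lnK (D_gt0 t)).
by rewrite ler_expR.
Qed.
End H.

Lemma hoeff (R : realType) (p t : R) : 0 <= p -> p <= 1 -> 0 <= t ->
  1 - p + p * expR (- t) <= expR (- (t * p) + 8^-1 * t ^+ 2).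
Proof. by move=> p0 p1 t0; exact: (@hoeff_aux R p p0 p1 t t0). Qed.
Section A.
Variables (R : realType) (n1 n2 rG : nat) (lam : R).
Variables (L : 'M[R]_(n1, n2)) (G : 'M[R]_(n1, rG)) (S0 : 'M[R]_(n1, n2)).
Hypothesis lam0 : 0 < lam.

Lemma l1_normD (A B : 'M[R]_(n1, n2)) : l1_norm (A + B) <= l1_norm A + l1_norm B.
Proof.
rewrite /l1_norm -big_split /=; apply: ler_sum => i _.
rewrite -big_split /=; apply: ler_sum => j _.
by rewrite mxE ler_normD.
Qed.

Lemma l1_split (Om Om' : {set 'I_n1 * 'I_n2}) : Om' \subset Om ->
  l1_norm (proj_Omega Om S0) =
  l1_norm (proj_Omega Om' S0) + l1_norm (proj_Omega Om S0 - proj_Omega Om' S0).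
Proof.
move=> sub.
rewrite /l1_norm -big_split /=; apply: eq_bigr => i _.
rewrite -big_split /=; apply: eq_bigr => j _.
rewrite !mxE.
case: ifP => h1; case: ifP => h2.
- by rewrite subrr normr0 addr0.
- by rewrite normr0 subr0 add0r.
- by move: (fintype.subsetP sub _ h2); rewrite h1.
- by rewrite subrr normr0 addr0.
Qed.

Lemma success_sub (Om Om' : {set 'I_n1 * 'I_n2}) : Om' \subset Om ->
  Success lam L G S0 Om -> Success lam L G S0 Om'.
Proof.
move=> sub.
rewrite /Success /unique_solution /is_minimizer /feasible /objective.
set Ln := (1%:M - G *m G^T) *m L.
set X := L^T *m G.
set S := proj_Omega Om S0.
set S' := proj_Omega Om' S0.
set Dm := S - S'.
have split := @l1_split Om Om' sub; rewrite -/S -/S' -/Dm in split.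
have SD : S = S' + Dm by rewrite /Dm addrC subrK.
move=> [[feas min] uniq].
have feasL : Ln + G *m X^T = L by move/(congr1 (fun A => A - S)): feas; rewrite !addrK.
have feas' : Ln + G *m X^T + S' = L + S' by rewrite feasL.
have min' : forall Ln' S'' X', Ln' + G *m X'^T + S'' = L + S' ->
    nuclear_norm Ln + lam * l1_norm S' <= nuclear_norm Ln' + lam * l1_norm S''.
  move=> Ln' S'' X' f'.
  have f2 : Ln' + G *m X'^T + (S'' + Dm) = L + S. by rewrite addrA f' -addrA -SD.
  have := min _ _ _ f2.
  have := l1_normD S'' Dm.
  rewrite split => h1 h2.
  have h3 : lam * l1_norm (S'' + Dm) <= lam * (l1_norm S'' + l1_norm Dm).
    by rewrite ler_pM2l.
  lra.
split; first by split.
move=> Ln' S'' X' [f' m'].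
have f2 : Ln' + G *m X'^T + (S'' + Dm) = L + S by rewrite addrA f' -addrA -SD.
have mz : forall a b c, a + G *m c^T + b = L + S ->
    nuclear_norm Ln' + lam * l1_norm (S'' + Dm) <= nuclear_norm a + lam * l1_norm b.
  move=> a b c fabc.
  have h0 := min _ _ _ fabc.
  have h1 := m' _ _ _ feas'.
  have := l1_normD S'' Dm => h2.
  have h3 : lam * l1_norm (S'' + Dm) <= lam * (l1_norm S'' + l1_norm Dm).
    by rewrite ler_pM2l.
  rewrite split in h0.
  lra.
have := uniq _ _ _ (conj f2 mz).
case=> -> eS ->; congr (_, _, _).
by apply: (addIr Dm); rewrite eS SD.
Qed.
End A.
Section C.
Local Open Scope nat_scope.
Variables (T : finType) (P : {set T} -> bool).
Hypothesis Pdown : forall A B : {set T}, B \subset A -> P A -> P B.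

Definition sc k := #|[set A : {set T} | (#|A| == k) && P A]|.

Lemma sc_rec k : sc k.+1 * k.+1 <= sc k * (#|T| - k).
Proof.
have E1 : sc k.+1 * k.+1 = \sum_(A : {set T}) \sum_(x : T)
    (if [&& #|A| == k.+1, P A & x \in A] then 1 else 0).
  rewrite /sc -sum_nat_const.
  rewrite (big_mkcond (fun A => A \in _)) /=; apply: eq_bigr => A _.
  rewrite inE; case: (boolP ((#|A| == k.+1) && P A)) => [/andP[/eqP cA pA]|].
    by rewrite cA eqxx pA /= -cA -sum1_card big_mkcond.
  by move/negbTE => h; rewrite big1 // => x _; rewrite andbA h.
have E2 : sc k * (#|T| - k) = \sum_(B : {set T}) \sum_(x : T)
    (if [&& #|B| == k, P B & x \notin B] then 1 else 0).
  rewrite /sc -sum_nat_const.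
  rewrite (big_mkcond (fun A => A \in _)) /=; apply: eq_bigr => A _.
  rewrite inE; case: (boolP ((#|A| == k) && P A)) => [/andP[/eqP cA pA]|].
    by rewrite cA eqxx pA /= -cA -(cardsC A) addKn -sum1_card big_mkcond; apply: eq_bigr => x _; rewrite finset.in_setC.
  by move/negbTE => h; rewrite big1 // => x _; rewrite andbA h.
rewrite E1 E2 exchange_big [X in _ <= X]exchange_big /=.
apply: leq_sum => x _.
rewrite -big_mkcond /= -[X in _ <= X]big_mkcond /=.
rewrite (reindex_onto (fun B => x |: B) (fun A => A :\ x)) /=; last first.
  by move=> A /and3P[_ _ xA]; rewrite finset.setD1K.
rewrite big_mkcond [X in _ <= X]big_mkcond /=; apply: leq_sum => B _.
case: (boolP (x \in B)) => xB.
  have -> : ((x |: B) :\ x == B) = false.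
    apply/negbTE/eqP => e; move: xB; rewrite -e; by rewrite !inE eqxx.
  by rewrite andbF.
rewrite finset.setU1K // eqxx andbT finset.setU11 andbT cardsU1 xB /= add1n eqSS.
case: (boolP (#|B| == k)) => //= _.
by case: (boolP (P (x |: B))) => //= /(@Pdown _ _ (finset.subsetUr [set x] B)) ->.
Qed.

Lemma sc_mono m k : m <= k -> sc k * 'C(#|T|, m) <= sc m * 'C(#|T|, k).
Proof.
move=> /subnK <-; elim: (k - m) => [|d IH]; first by rewrite add0n.
rewrite addSn.
have h := sc_rec (d + m).
rewrite -(leq_pmul2r (ltn0Sn (d + m))).
have -> : sc m * 'C(#|T|, (d + m).+1) * (d + m).+1 = sc m * ('C(#|T|, d + m) * (#|T| - (d+m))).
  by rewrite -mulnA [X in _ * X = _]mulnC mul_bin_left [X in _ * X = _]mulnC.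
apply: (@leq_trans (sc (d + m) * (#|T| - (d + m)) * 'C(#|T|, m))).
  by rewrite mulnAC leq_mul2r h orbT.
rewrite mulnAC mulnA leq_mul2r IH orbT //.
Qed.
End C.
Section C2.
Variables (R : realFieldType) (T : finType) (P : {set T} -> bool).
Definition sc2 k := #|[set A : {set T} | (#|A| == k) && P A]|.

Lemma group_sum (F : nat -> R) :
  \sum_(A : {set T} | P A) F #|A| = \sum_(k < #|T|.+1) (sc2 k)%:R * F k.
Proof.
rewrite (partition_big (fun A : {set T} => (inord #|A| : 'I_#|T|.+1)) xpredT) //=.
apply: eq_bigr => k _.
rewrite /sc2 mulr_natl -sumr_const.
apply: eq_big => A.
  rewrite inE andbC; congr (_ && _).
  by rewrite -(inj_eq val_inj) /= inordK // ltnS max_card.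
move=> /andP[_ /eqP <-]; rewrite inordK // ltnS max_card //.
Qed.

Lemma sc2_le k : (sc2 k <= 'C(#|T|, k))%N.
Proof.
rewrite -card_draws /sc2; apply: subset_leq_card.
by apply/fintype.subsetP => A; rewrite !inE => /andP[].
Qed.

Lemma binom_sum (x y : R) (N : nat) :
  \sum_(k < N.+1) ('C(N, k))%:R * (y ^+ k * x ^+ (N - k)) = (x + y) ^+ N.
Proof.
rewrite exprDn; apply: eq_bigr => k _.
by rewrite mulr_natl mulrC.
Qed.
End C2.

Theorem lemma1 (R : realType) (n1 n2 r rG : nat) (lam : R)
  (L : 'M[R]_(n1, n2)) (G : 'M[R]_(n1, rG)) (S0 : 'M[R]_(n1, n2))
  (m0 : nat) (eps0 : R) :
  (0 < n1)%N -> (0 < n2)%N ->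
  0 < lam ->
  \rank L = r ->
  G^T *m G = 1%:M ->
  (\rank ((1%:M - G *m G^T) *m L) < r)%N ->
  (forall i j, S0 i j != 0) ->
  0 < eps0 ->
  0 <= m0%:R / (n1 * n2)%:R + eps0 <= 1 ->
  prob_unif m0 (Success lam L G S0) >=
  prob_ber (m0%:R / (n1 * n2)%:R + eps0) (Success lam L G S0)
  - expR (- (2 * (n1 * n2)%:R * eps0 ^+ 2)).
Proof.
move=> n10 n20 lam0 _ _ _ _ e0 /andP[rho0 rho1].
set N := (n1 * n2)%N.
set rho := m0%:R / N%:R + eps0.
rewrite -/N -/rho in rho0 rho1.
set E := Success lam L G S0.
pose P := fun Om : {set 'I_n1 * 'I_n2} => `[< E Om >].
have Pdown : forall A B : {set 'I_n1 * 'I_n2}, B \subset A -> P A -> P B.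
  move=> A B sub /asboolP h; apply/asboolP.
  exact: (@success_sub R n1 n2 rG lam L G S0 lam0 A B sub h).
have cardT : #|{: 'I_n1 * 'I_n2}| = N by rewrite card_prod !card_ord.
have Npos : (0 < N)%N by rewrite muln_gt0 n10.
have NR : 0 < (N%:R : R) by rewrite ltr0n.
have m0N : (m0 <= N)%N.
  have h : m0%:R / N%:R < (1 : R) by move: rho1; rewrite /rho; lra.
  rewrite ltr_pdivrMr // mul1r ltr_nat in h.
  exact: ltnW.
have U : prob_unif m0 E = (sc2 _ P m0)%:R / ('C(N, m0))%:R by [].
have B : prob_ber rho E =
    \sum_(k < #|{: 'I_n1 * 'I_n2}|.+1) (sc2 _ P k)%:R * (rho ^+ k * (1 - rho) ^+ (N - k)).
  exact: (@group_sum _ _ P (fun k => rho ^+ k * (1 - rho) ^+ (N - k))).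
rewrite cardT in B.
rewrite U B.
have Cm0 : 0 < ('C(N, m0))%:R :> R by rewrite ltr0n bin_gt0.
set pU := (sc2 _ P m0)%:R / ('C(N, m0))%:R.
have pU0 : 0 <= pU by apply: divr_ge0.
have bk0 : forall k, 0 <= rho ^+ k * (1 - rho) ^+ (N - k).
  by move=> k; apply: mulr_ge0; apply: exprn_ge0; lra.
have step1 : \sum_(k < N.+1) (sc2 _ P k)%:R * (rho ^+ k * (1 - rho) ^+ (N - k)) <=
   \sum_(k < N.+1) (if (k < m0)%N then ('C(N, k))%:R * (rho ^+ k * (1 - rho) ^+ (N - k)) else 0) + pU.
  have -> : pU = \sum_(k < N.+1) pU * (('C(N, k))%:R * (rho ^+ k * (1 - rho) ^+ (N - k))).
    rewrite -mulr_sumr binom_sum.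
    by rewrite subrK expr1n mulr1.
  rewrite -big_split /=; apply: ler_sum => k _.
  have Ck0 : 0 <= ('C(N, k))%:R :> R by [].
  case: ifP => hk.
    rewrite -[X in X <= _]addr0; apply: lerD.
      apply: ler_wpM2r => //; rewrite ler_nat.
      by have := sc2_le _ P k; rewrite cardT.
    by apply: mulr_ge0 => //; apply: mulr_ge0.
  rewrite add0r [X in _ <= X]mulrA; apply: ler_wpM2r => //.
  have := @sc_mono _ P Pdown m0 k; rewrite cardT.
  move/negbT: hk; rewrite -leqNgt => hk /(_ hk) h.
  rewrite /pU mulrAC ler_pdivlMr // -!natrM ler_nat.
  by rewrite /sc2; exact: h.
set t := 4 * eps0.
have t0 : 0 <= t by rewrite /t; lra.
have step2 : \sum_(k < N.+1) (if (k < m0)%N then ('C(N, k))%:R * (rho ^+ k * (1 - rho) ^+ (N - k)) else 0)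
    <= \sum_(k < N.+1) ('C(N, k))%:R * ((rho * expR (- t)) ^+ k * (1 - rho) ^+ (N - k)) * expR (t * m0%:R).
  apply: ler_sum => k _.
  have Ck0 : 0 <= ('C(N, k))%:R :> R by [].
  case: ifP => hk; last first.
    by apply: mulr_ge0; [apply: mulr_ge0 => //; apply: mulr_ge0; apply: exprn_ge0; [apply: mulr_ge0; [lra|apply: ltW; apply: expR_gt0]|lra]| apply: ltW; apply: expR_gt0].
  rewrite exprMn -expRM_natl.
  have ge1 : 1 <= expR (k%:R * - t) * expR (t * m0%:R).
    rewrite -expRD.
    have hk' : (k%:R : R) <= m0%:R by rewrite ler_nat ltnW.
    apply: le_trans (expR_ge1Dx _); nra.
  have -> : ('C(N, k))%:R * (rho ^+ k * expR (k%:R * - t) * (1 - rho) ^+ (N - k)) * expR (t * m0%:R)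
      = ('C(N, k))%:R * (rho ^+ k * (1 - rho) ^+ (N - k)) * (expR (k%:R * - t) * expR (t * m0%:R)).
    ring.
  apply: ler_peMr => //; exact: mulr_ge0.
have step3 : \sum_(k < N.+1) ('C(N, k))%:R * ((rho * expR (- t)) ^+ k * (1 - rho) ^+ (N - k)) * expR (t * m0%:R)
    <= expR (- (2 * N%:R * eps0 ^+ 2)).
  rewrite -mulr_suml binom_sum.
  have hh' : 1 - rho + rho * expR (- t) <= expR (- (t * rho) + 8^-1 * t ^+ 2).
    by apply: hoeff => //; lra.
  have D0 : 0 <= 1 - rho + rho * expR (- t).
    have := expR_gt0 (- t); nra.
  have := lerXn2r N D0 (ltW (expR_gt0 _)) hh'.
  rewrite -expRM_natl => hN.
  apply: le_trans (ler_wpM2r (ltW (expR_gt0 _)) hN) _.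
  have Ee : N%:R * (- (t * rho) + 8^-1 * t ^+ 2) + t * m0%:R = - (2 * N%:R * eps0 ^+ 2).
    rewrite /rho /t; field.
    by rewrite gt_eqF.
  by rewrite -expRD Ee.
have := le_trans step2 step3.
lra.
Qed.
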